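(* For a subsystem code with logical subsystem $\mathcal{H}_L$ of dimension at least $2$, the code price is at least the code distance: $p\ge d$.
   Context: Subsystem code: encoding isometry $V:\mathcal{H}_L\otimes\mathcal{H}_J\to\mathcal{H}_p$ onto a physical system of finitely many qudits; $\Pi=VV^\dagger$. $A$ is CSP if $[A,\Pi]=0$; bare-CSP if moreover $V^\dagger AV=A_L\otimes\mathrm{Id}_J$ (it implements $A_L\otimes\mathrm{Id}_J$). A region $R$ is a set of physical qudits; supported on $R$ means of the form $A_R\otimes\mathrm{Id}_{R^c}$. $R$ is correctable if for every $A_L\in\mathcal{B}(\mathcal{H}_L)$ there is a bare-CSP operator supported on $R^c$ implementing $A_L\otimes\mathrm{Id}_J$. Code distance $d=\min\{|R|: R\text{ not correctable}\}$; code price $p=\min\{|R|: R^c\text{ correctable}\}$, with $|R|$ the number of qudits. *)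

(* Defs.v *)
From HB Require Import structures.
From mathcomp Require Import all_boot all_order all_algebra.
Set Implicit Arguments. Unset Strict Implicit. Unset Printing Implicit Defensive.
Import Order.TTheory GRing.Theory Num.Theory.
Local Open Scope ring_scope.

Section Codes.
Variable C : numClosedFieldType.

(* An operator from a space with basis T to a space with basis U, as a matrix
   (row index in U, column index in T). *)
Definition op (U T : finType) := U -> T -> C.

Definition opmul (U T S : finType) (A : op U T) (B : op T S) : op U S :=
  fun u s => \sum_(t : T) A u t * B t s.

Definition opadj (U T : finType) (A : op U T) : op T U := fun t u => (A u t)^*.

Definition opid (T : finType) : op T T := fun t t' => (t == t')%:R.

Definition optens (T1 T2 : finType) (A : op T1 T1) (B : op T2 T2) : op (T1 * T2)%type (T1 * T2)%type :=
  fun x y => A x.1 y.1 * B x.2 y.2.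

(* Physical system: n qudits, qudit i has local dimension dims i.
   Computational basis of H_p: configurations. *)
Variable n : nat.
Variable dims : 'I_n -> nat.
Definition conf : finType := {dffun forall i : 'I_n, 'I_(dims i)}.
(* Basis of the Hilbert space of the qudits in a region R *)
Definition rconf (R : {set 'I_n}) : finType := {dffun forall i : {i : 'I_n | i \in R}, 'I_(dims (sval i))}.
Definition restr (R : {set 'I_n}) (x : conf) : rconf R := [ffun i => x (sval i)].

(* A is supported on R: A = A_R (x) Id_{R^c}, written in the product basis. *)
Definition supported_on (R : {set 'I_n}) (A : op conf conf) : Prop :=
  exists AR : op (rconf R) (rconf R),
    forall x y : conf,
      A x y = AR (restr R x) (restr R y) * (restr (~: R) x == restr (~: R) y)%:R.

(* Logical subsystem of dimension dL, gauge subsystem of dimension dJ. *)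
Variables dL dJ : nat.
Definition cbasis : finType := ('I_dL * 'I_dJ)%type.
Variable V : op conf cbasis.   (* encoding map H_L (x) H_J -> H_p *)

Definition code_isometry := opmul (opadj V) V = @opid cbasis.
Definition code_proj : op conf conf := opmul V (opadj V).

Definition is_CSP (A : op conf conf) : Prop := opmul A code_proj = opmul code_proj A.

Definition bare_CSP_impl (A : op conf conf) (AL : op 'I_dL 'I_dL) : Prop :=
  is_CSP A /\ opmul (opadj V) (opmul A V) = optens AL (@opid 'I_dJ).

Definition correctable (R : {set 'I_n}) : Prop :=
  forall AL : op 'I_dL 'I_dL,
    exists A : op conf conf, supported_on (~: R) A /\ bare_CSP_impl A AL.

Definition is_code_distance (d : nat) : Prop :=
  (exists R : {set 'I_n}, ~ correctable R /\ #|R| = d) /\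
  (forall R : {set 'I_n}, ~ correctable R -> (d <= #|R|)%N).

Definition is_code_price (p : nat) : Prop :=
  (exists R : {set 'I_n}, correctable (~: R) /\ #|R| = p) /\
  (forall R : {set 'I_n}, correctable (~: R) -> (p <= #|R|)%N).

End Codes.

(* Main.v *)
Require Import Defs.
From mathcomp Require Import all_boot all_order all_algebra.
From Stdlib Require Import FunctionalExtensionality.
Set Implicit Arguments. Unset Strict Implicit. Unset Printing Implicit Defensive.
Import Order.TTheory GRing.Theory Num.Theory.
Local Open Scope ring_scope.

Section Aux.
Variable C : numClosedFieldType.

Lemma opmulA (U T S W : finType) (A : op C U T) (B : op C T S) (D : op C S W) :
  opmul (opmul A B) D = opmul A (opmul B D).
Proof.
apply: functional_extensionality => u; apply: functional_extensionality => w.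
rewrite /opmul.
under eq_bigr do rewrite big_distrl.
rewrite exchange_big /=; apply: eq_bigr => t _.
rewrite big_distrr /=; apply: eq_bigr => s _; by rewrite mulrA.
Qed.

Lemma opmul1 (U T : finType) (A : op C U T) : opmul A (opid C (T:=T)) = A.
Proof.
apply: functional_extensionality => u; apply: functional_extensionality => t.
rewrite /opmul /opid (bigD1 t) //= eqxx mulr1 big1 ?addr0 // => s /negbTE ->.
by rewrite mulr0.
Qed.

Lemma optens_mul (T1 T2 : finType) (X Z : op C T1 T1) (Y W : op C T2 T2) :
  opmul (optens X Y) (optens Z W) = optens (opmul X Z) (opmul Y W).
Proof.
apply: functional_extensionality => u; apply: functional_extensionality => s.
rewrite /opmul /optens big_distrl /=.
under [RHS]eq_bigr do rewrite big_distrr /=.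
rewrite pair_bigA /=; apply: eq_bigr => -[a b] _ /=.
by rewrite mulrACA.
Qed.

Variables (n : nat) (dims : 'I_n -> nat).

Lemma restr_inj (R : {set 'I_n}) (x y : conf dims) :
  restr R x = restr R y -> forall i, i \in R -> x i = y i.
Proof.
move=> e i iR; have := congr1 (fun f : rconf dims R => f (exist (fun j => j \in R) i iR)) e.
by rewrite !ffunE.
Qed.

Lemma restr_eq (R : {set 'I_n}) (x y : conf dims) :
  (forall i, i \in R -> x i = y i) -> restr R x = restr R y.
Proof. by move=> h; apply/ffunP => -[i iR]; rewrite !ffunE /= h. Qed.

Lemma key_sum (P Q P' Q' : {set 'I_n})
  (hP' : P' =i P) (hQ : forall i, (i \in Q) = (i \notin P))
  (hQ' : forall i, (i \in Q') = (i \notin P))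
  (a : op C (rconf dims P) (rconf dims P)) (b : op C (rconf dims Q') (rconf dims Q'))
  (x z : conf dims) :
  \sum_(y : conf dims) (a (restr P x) (restr P y) * (restr Q x == restr Q y)%:R) *
     (b (restr Q' y) (restr Q' z) * (restr P' y == restr P' z)%:R)
  = a (restr P x) (restr P z) * b (restr Q' x) (restr Q' z).
Proof.
pose m : conf dims := [ffun i => if i \in P then z i else x i].
have m1 : restr P m = restr P z by apply: restr_eq => i iP; rewrite ffunE iP.
have m2 : restr Q x = restr Q m.
  by apply: restr_eq => i; rewrite hQ ffunE => /negbTE ->.
have m3 : restr Q' m = restr Q' x.
  by apply: restr_eq => i; rewrite hQ' ffunE => /negbTE ->.
have m4 : restr P' m = restr P' z.
  by apply: restr_eq => i; rewrite hP' ffunE => ->.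
rewrite (bigD1 m) //= big1 ?addr0; first by rewrite m1 m2 m3 m4 !eqxx !mulr1.
move=> y ym.
case E1: (restr Q x == restr Q y); last by rewrite /= !mulr0 !mul0r.
case E2: (restr P' y == restr P' z); last by rewrite /= !mulr0.
exfalso; move/negP: ym; apply; apply/eqP/ffunP => i; rewrite ffunE.
case: ifP => iP.
  by apply: (restr_inj (eqP E2)); rewrite hP'.
by apply/esym/(restr_inj (eqP E1)); rewrite hQ iP.
Qed.

Variables (dL dJ : nat) (V : op C (conf dims) (cbasis dL dJ)).
Hypothesis hV : code_isometry V.

Lemma PiV : opmul (code_proj V) V = V.
Proof. by rewrite /code_proj opmulA hV opmul1. Qed.

Lemma csp_mul (A B : op C (conf dims) (conf dims)) : is_CSP V B ->
  opmul (opadj V) (opmul (opmul A B) V) =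
  opmul (opmul (opadj V) (opmul A V)) (opmul (opadj V) (opmul B V)).
Proof.
move=> hB; set M := opmul (opadj V) (opmul B V).
have BV : opmul B V = opmul V M.
  have -> : opmul B V = opmul B (opmul (code_proj V) V) by rewrite PiV.
  by rewrite -opmulA hB opmulA /code_proj opmulA.
by rewrite opmulA BV !opmulA.
Qed.

End Aux.

Theorem lemma3 (C : numClosedFieldType) (n : nat) (dims : 'I_n -> nat)
  (dL dJ : nat) (V : op C (conf dims) (cbasis dL dJ))
  (hV : code_isometry V) (hL : (2 <= dL)%N) (d p : nat)
  (hd : is_code_distance V d) (hp : is_code_price V p) :
  (d <= p)%N.
Proof.
move: hd hp => [[R0 [nc0 _]] hdmin] [[R [cR <-]] _]; apply: hdmin => cRR.
have dJ0 : (0 < dJ)%N.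
  rewrite lt0n; apply/negP => /eqP e; apply: nc0 => AL.
  exists (fun _ _ => 0); split.
    by exists (fun _ _ => 0) => x y; rewrite mul0r.
  split.
    apply: functional_extensionality => x; apply: functional_extensionality => y.
    by rewrite /opmul !big1 // => t _; rewrite ?mul0r ?mulr0.
  apply: functional_extensionality => -[u [j hj]].
  by exfalso; rewrite e in hj.
pose i0 : 'I_dL := Ordinal (ltnW hL).
pose i1 : 'I_dL := Ordinal hL.
pose j : 'I_dJ := Ordinal dJ0.
pose X : op C 'I_dL 'I_dL := fun a b => ((a == i0) && (b == i1))%:R.
pose Z : op C 'I_dL 'I_dL := fun a b => ((a == i0) && (b == i0))%:R.
have [A [sA [cA iA]]] := cRR X.
have [B [sB [cB iB]]] := cR Z.
have comm : opmul A B = opmul B A.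
  move: sA sB => [a ha] [b hb].
  apply: functional_extensionality => x; apply: functional_extensionality => z.
  rewrite /opmul.
  under eq_bigr do rewrite ha hb.
  rewrite (key_sum (P := ~: R) (Q := ~: ~: R) (P' := ~: ~: ~: R) (Q' := ~: ~: R));
    try by move=> i; rewrite !inE ?negbK.
  under eq_bigr do rewrite ha hb.
  rewrite (key_sum (P := ~: ~: R) (Q := ~: ~: ~: R) (P' := ~: ~: R) (Q' := ~: R));
    try by move=> i; rewrite !inE ?negbK.
  by rewrite mulrC.
have e1 := csp_mul hV A cB.
have e2 := csp_mul hV B cA.
rewrite comm e2 iA iB !optens_mul opmul1 in e1.
have := congr1 (fun f => f (i0, j) (i1, j)) e1.
rewrite /optens /= /opid eqxx mulr1 /opmul.
have ne10 : (i1 == i0) = false by [].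
rewrite [Y in _ = Y * _]big1; last by move=> t _; rewrite /X /Z /= ne10 andbF mulr0.
rewrite (bigD1 i0) //= big1 ?addr0; last first.
  by move=> t /negbTE tn; rewrite /X /Z /= tn /= mul0r.
rewrite /X /Z /= ?eqxx /= ?mulr1 ?mul0r => /eqP; by rewrite oner_eq0.
Qed.
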